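(* Let $\Sigma \in \mathbb{R}^{3\times 3}$ be a symmetric positive definite matrix and let $\mathbf{c}_1,\dots,\mathbf{c}_\kappa \in \mathbb{R}^3$. For $k=1,\dots,\kappa$ define $\phi_k:\mathbb{R}^3\to\mathbb{R}$ by $\phi_k(\mathbf{x}) = \exp\!\big(-(\mathbf{x}-\mathbf{c}_k)^\top \Sigma^{-1}(\mathbf{x}-\mathbf{c}_k)\big)$, and let $\Phi:\mathbb{R}^3\to\mathbb{R}^\kappa$, $\Phi(\mathbf{x}) = [\phi_1(\mathbf{x}),\dots,\phi_\kappa(\mathbf{x})]^\top$. If the points $\mathbf{c}_1,\dots,\mathbf{c}_\kappa$ do not all lie in a common (affine) hyperplane of $\mathbb{R}^3$, then $\Phi$ is injective.
   Context: A hyperplane of $\mathbb{R}^3$ means a set of the form $\{\mathbf{c}\in\mathbb{R}^3 : \mathbf{b}^\top \mathbf{c} = a\}$ with $\mathbf{b}\in\mathbb{R}^3\setminus\{0\}$, $a\in\mathbb{R}$. *)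

(* Defs.v *)
From HB Require Import structures.
From mathcomp Require Import all_boot all_order all_algebra.
From mathcomp Require Import all_classical all_reals all_analysis.
Set Implicit Arguments. Unset Strict Implicit. Unset Printing Implicit Defensive.
Import Order.TTheory GRing.Theory Num.Theory.
Local Open Scope ring_scope.

Definition sym_posdef (R : realType) (S : 'M[R]_3) : Prop :=
  S^T = S /\ forall v : 'cV[R]_3, v != 0 -> 0 < (v^T *m S *m v) 0 0.

Definition gauss_feature (R : realType) (Sigma : 'M[R]_3) (c x : 'cV[R]_3) : R :=
  expR (- ((x - c)^T *m invmx Sigma *m (x - c)) 0 0).

Definition Phi (R : realType) (kappa : nat) (Sigma : 'M[R]_3)
  (c : 'I_kappa -> 'cV[R]_3) (x : 'cV[R]_3) : 'cV[R]_kappa :=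
  \col_(k < kappa) gauss_feature Sigma (c k) x.

Definition in_hyperplane (R : realType) (b : 'cV[R]_3) (a : R) (y : 'cV[R]_3) : Prop :=
  (b^T *m y) 0 0 = a.

Definition all_in_common_hyperplane (R : realType) (kappa : nat)
  (c : 'I_kappa -> 'cV[R]_3) : Prop :=
  exists (b : 'cV[R]_3) (a : R), b != 0 /\ forall k, in_hyperplane b a (c k).

(* Main.v *)
Require Import Defs.
From HB Require Import structures.
From mathcomp Require Import all_boot all_order all_algebra.
From mathcomp Require Import all_classical all_reals all_analysis.
From mathcomp Require Import lra.
Import Order.TTheory GRing.Theory Num.Theory.
Local Open Scope ring_scope.

Lemma tr11 (R : realType) (A : 'M[R]_1) : A^T = A.
Proof. by apply/matrixP => i j; rewrite !ord1 mxE. Qed.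

Theorem mainTheorem1 (R : realType) (kappa : nat) (Sigma : 'M[R]_3)
  (c : 'I_kappa -> 'cV[R]_3) :
  sym_posdef Sigma ->
  ~ all_in_common_hyperplane c ->
  injective (Phi Sigma c).
Proof.
move=> [Hsym Hpos] Hnh x y Hxy.
have Su : Sigma \in unitmx.
  rewrite unitmxE unitfE; apply/det0P => -[v v0 vS].
  have := Hpos v^T; rewrite trmx_eq0 => /(_ v0).
  by rewrite trmxK vS mul0mx mxE ltxx.
set M := invmx Sigma.
have hM : M^T = M by rewrite /M trmx_inv Hsym.
have Mu : M \in unitmx by rewrite /M unitmx_inv.
have key : forall z d : 'cV[R]_3, (z - d)^T *m M *m (z - d) =
   z^T *m M *m z - 2%:R *: (d^T *m M *m z) + d^T *m M *m d.
  move=> z d.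
  have e : z^T *m M *m d = d^T *m M *m z.
    by rewrite -[LHS]tr11 !trmx_mul hM trmxK mulmxA.
  rewrite mulmxBr [(z - d)^T]linearB /= !mulmxBl e.
  set p := z^T *m M *m z; set q := d^T *m M *m z; set r := d^T *m M *m d.
  apply/matrixP => i j; rewrite !mxE; lra.
apply/eqP; rewrite -subr_eq0; apply/negPn/negP => nz.
apply: Hnh.
exists (M *m (x - y)), (((x^T *m M *m x) 0 0 - (y^T *m M *m y) 0 0) / 2%:R).
split.
  apply/negP => /eqP h; move/negP: nz; apply.
  by rewrite -(mulKmx Mu (x - y)) h mulmx0.
move=> k; rewrite /in_hyperplane.
have h := congr1 (fun v : 'cV_kappa => v k 0) Hxy.
rewrite /= !mxE /gauss_feature in h.
move: h; move/expR_inj/eqP; rewrite eqr_opp => /eqP.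
rewrite !key.
have e2 : (x - y)^T *m M *m c k = x^T *m M *m c k - y^T *m M *m c k.
  by rewrite [(x - y)^T]linearB /= !mulmxBl.
have e3 : forall z : 'cV[R]_3, z^T *m M *m c k = (c k)^T *m M *m z.
  by move=> z; rewrite -[LHS]tr11 !trmx_mul hM trmxK mulmxA.
rewrite trmx_mul hM e2 !e3.
move: (x^T *m M *m x) (y^T *m M *m y) ((c k)^T *m M *m x) ((c k)^T *m M *m y)
  ((c k)^T *m M *m c k) => p p' q q' r.
rewrite !mxE.
move: (p 0 0) (p' 0 0) (q 0 0) (q' 0 0) (r 0 0) => a a' b b' e h.
lra.
Qed.
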